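(* Let $R=\epsilon^2R_\epsilon$. At the point $\mathbf{x}(v)\in\mathcal{E}_e$ let $\hat{\mathbf{n}}(v)=(\sqrt{1-e^2}\cos v,\ \sin v,\ 0)/\sqrt{1-e^2\cos^2 v}$ be the unit normal to $\mathcal{E}_e$ in the plane $z=0$ and $\hat{\mathbf{k}}=(0,0,1)$. Then the second directional derivatives of $R$ at $\mathbf{x}(v)$ are $$\partial^2_{\hat{\mathbf n}}R=-\frac{\mu^2}{\lambda^3}\,\frac{1+e\cos v}{(1-e\cos v)(1+e^2+2e\cos v)},\qquad \partial^2_{\hat{\mathbf k}}R=-\frac{\mu^2}{\lambda^3}\,\frac{1}{1+e^2-2e\cos v},$$ so that the effective standard deviations $\epsilon\,|\partial^2_{\hat{\mathbf h}}R|^{-1/2}$ of the measure with density proportional to $\exp(2R/\epsilon^2)$, normal to the Kepler ellipse in the plane $z=0$ and in the $z$ direction, are respectively $$\frac{\epsilon\lambda^{3/2}}{\mu}\sqrt{\frac{(1-e\cos v)(1+e^2+2e\cos v)}{1+e\cos v}}\qquad\text{and}\qquad \frac{\epsilon\lambda^{3/2}}{\mu}\sqrt{1+e^2-2e\cos v}.$$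
   Context: Fix $\mu>0$, $\lambda>0$, $e\in(0,1)$ and set $a=\lambda^2/\mu$. For $\mathbf{x}=(x,y,z)\in\mathbb{R}^3$ let $\nu(\mathbf{x})=\frac{\mu}{\lambda^2}\big(|\mathbf{x}|-\frac{x}{e}-\frac{\mathrm{i}y\sqrt{1-e^2}}{e}\big)$, with $\sqrt{\cdot}$ the principal branch of the complex square root. Let $N=\{0\}\cup\{\mathbf{x}: y=0,\ \nu(\mathbf{x})\in[0,4]\}$. For $\epsilon>0$ define on $\mathbb{R}^3\setminus N$ $$R_\epsilon(\mathbf{x})=\frac{\lambda}{\epsilon^2}\Big[\ln|\nu|+2\ln\big|1+\sqrt{1-4/\nu}\big|-\frac{\mu|\mathbf{x}|}{\lambda^2}+\tfrac12\operatorname{Re}\big(\nu(1-\sqrt{1-4/\nu})\big)\Big],$$ so $R=\epsilon^2R_\epsilon$ is independent of $\epsilon$. The Kepler ellipse is $\mathcal{E}_e=\{\mathbf{x}(v):=(a\cos v-ae,\ a\sqrt{1-e^2}\sin v,\ 0):v\in[0,2\pi)\}$. *)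

(* Defs.v *)
From Stdlib Require Import Reals Lra.
Open Scope R_scope.

Definition Cx : Type := (R * R)%type.
Definition Cre (z : Cx) : R := fst z.
Definition Cim (z : Cx) : R := snd z.
Definition Cadd (z w : Cx) : Cx := (fst z + fst w, snd z + snd w).
Definition Csub (z w : Cx) : Cx := (fst z - fst w, snd z - snd w).
Definition Cmul (z w : Cx) : Cx :=
  (fst z * fst w - snd z * snd w, fst z * snd w + snd z * fst w).
Definition Cinv (z : Cx) : Cx :=
  let n := fst z ^ 2 + snd z ^ 2 in (fst z / n, - snd z / n).
Definition Cmod (z : Cx) : R := sqrt (fst z ^ 2 + snd z ^ 2).
Definition Cofr (r : R) : Cx := (r, 0).

(* Principal branch of the complex square root (Re >= 0; Im >= 0 on the
   negative real axis). *)
Definition Csqrt (z : Cx) : Cx :=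
  let r := Cmod z in
  (sqrt ((r + fst z) / 2),
   (if Rlt_dec (snd z) 0 then -1 else 1) * sqrt ((r - fst z) / 2)).

Definition R3 : Type := (R * R * R)%type.
Definition px (p : R3) : R := fst (fst p).
Definition py (p : R3) : R := snd (fst p).
Definition pz (p : R3) : R := snd p.
Definition norm3 (p : R3) : R := sqrt (px p ^ 2 + py p ^ 2 + pz p ^ 2).
Definition add3 (p q : R3) : R3 := (px p + px q, py p + py q, pz p + pz q).
Definition scal3 (t : R) (p : R3) : R3 := (t * px p, t * py p, t * pz p).

Definition nu (mu lam e : R) (p : R3) : Cx :=
  (mu / lam ^ 2 * (norm3 p - px p / e),
   mu / lam ^ 2 * (- (py p * sqrt (1 - e ^ 2) / e))).

(* R_eps(x) = lam/eps^2 [ ln|nu| + 2 ln|1+sqrt(1-4/nu)| - mu|x|/lam^2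
                          + 1/2 Re(nu (1 - sqrt(1-4/nu))) ]
   (total function; only meaningful off N) *)
Definition Reps (mu lam e eps : R) (p : R3) : R :=
  let n := nu mu lam e p in
  let s := Csqrt (Csub (Cofr 1) (Cmul (Cofr 4) (Cinv n))) in
  lam / eps ^ 2 *
  ( ln (Cmod n) + 2 * ln (Cmod (Cadd (Cofr 1) s))
    - mu * norm3 p / lam ^ 2
    + / 2 * Cre (Cmul n (Csub (Cofr 1) s)) ).

Definition xell (mu lam e v : R) : R3 :=
  let a := lam ^ 2 / mu in
  (a * cos v - a * e, a * sqrt (1 - e ^ 2) * sin v, 0).

Definition nhat (e v : R) : R3 :=
  let d := sqrt (1 - e ^ 2 * (cos v) ^ 2) in
  (sqrt (1 - e ^ 2) * cos v / d, sin v / d, 0).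

Definition khat : R3 := (0, 0, 1).

Definition second_dir_deriv (f : R3 -> R) (p h : R3) (val : R) : Prop :=
  exists g' : R -> R,
    (exists d, 0 < d /\ forall t, Rabs t < d ->
        derivable_pt_lim (fun s => f (add3 p (scal3 s h))) t (g' t)) /\
    derivable_pt_lim g' 0 val.

(* Main.v *)
Require Import Defs.
From Stdlib Require Import Reals Lra Nsatz.
Open Scope R_scope.

Lemma D_eq f x l l' : derivable_pt_lim f x l -> l = l' -> derivable_pt_lim f x l'.
Proof. intros H <-; exact H. Qed.
Lemma D_plus (f g : R -> R) x l1 l2 : derivable_pt_lim f x l1 -> derivable_pt_lim g x l2 ->
  derivable_pt_lim (fun u => f u + g u) x (l1 + l2).
Proof. intros; apply (derivable_pt_lim_plus f g); auto. Qed.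
Lemma D_minus (f g : R -> R) x l1 l2 : derivable_pt_lim f x l1 -> derivable_pt_lim g x l2 ->
  derivable_pt_lim (fun u => f u - g u) x (l1 - l2).
Proof. intros; apply (derivable_pt_lim_minus f g); auto. Qed.
Lemma D_mult (f g : R -> R) x l1 l2 : derivable_pt_lim f x l1 -> derivable_pt_lim g x l2 ->
  derivable_pt_lim (fun u => f u * g u) x (l1 * g x + f x * l2).
Proof. intros; apply (derivable_pt_lim_mult f g); auto. Qed.
Lemma D_div (f g : R -> R) x l1 l2 : derivable_pt_lim f x l1 -> derivable_pt_lim g x l2 ->
  g x <> 0 -> derivable_pt_lim (fun u => f u / g u) x ((l1 * g x - l2 * f x) / (g x)^2).
Proof. intros. eapply D_eq. apply (derivable_pt_lim_div f g x l1 l2); auto. unfold Rsqr; field; auto. Qed.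
Lemma D_opp (f : R -> R) x l : derivable_pt_lim f x l ->
  derivable_pt_lim (fun u => - f u) x (- l).
Proof. intros; apply (derivable_pt_lim_opp f); auto. Qed.
Lemma D_const c x : derivable_pt_lim (fun _ => c) x 0.
Proof. apply (derivable_pt_lim_const c). Qed.
Lemma D_id x : derivable_pt_lim (fun u => u) x 1.
Proof. apply derivable_pt_lim_id. Qed.
Lemma D_sq (f : R -> R) x l : derivable_pt_lim f x l ->
  derivable_pt_lim (fun u => f u ^ 2) x (2 * f x * l).
Proof. intros. eapply D_eq. apply (derivable_pt_lim_comp f (fun y => y^2) x l); auto.
  apply derivable_pt_lim_pow. simpl; ring. Qed.
Lemma D_sqrt (f : R -> R) x l : derivable_pt_lim f x l -> 0 < f x ->
  derivable_pt_lim (fun u => sqrt (f u)) x (l / (2 * sqrt (f x))).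
Proof. intros. eapply D_eq. apply (derivable_pt_lim_comp f sqrt x l); auto.
  apply derivable_pt_lim_sqrt; auto. unfold Rdiv; ring. Qed.
Lemma D_ln (f : R -> R) x l : derivable_pt_lim f x l -> 0 < f x ->
  derivable_pt_lim (fun u => ln (f u)) x (l / f x).
Proof. intros. eapply D_eq. apply (derivable_pt_lim_comp f ln x l); auto.
  apply derivable_pt_lim_ln; auto. unfold Rdiv; ring. Qed.
Lemma D_lnsqrt (f : R -> R) x l : derivable_pt_lim f x l -> 0 < f x ->
  derivable_pt_lim (fun u => ln (sqrt (f u))) x (l / (2 * f x)).
Proof. intros. assert (H1 := sqrt_lt_R0 _ H0).
  assert (H2 := sqrt_sqrt (f x) (Rlt_le _ _ H0)).
  eapply D_eq. apply (D_ln (fun u => sqrt (f u))). apply (D_sqrt f x l); auto. auto.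
  field_simplify_eq. rewrite <- H2 at 1. ring. lra. Qed.

Ltac dstep :=
  match goal with
  | |- derivable_pt_lim (fun _ => ?c) _ _ => apply D_const
  | |- derivable_pt_lim (fun u => u) _ _ => apply D_id
  | |- derivable_pt_lim (fun u => @?f u + @?g u) _ _ => apply (D_plus f g)
  | |- derivable_pt_lim (fun u => @?f u - @?g u) _ _ => apply (D_minus f g)
  | |- derivable_pt_lim (fun u => @?f u * @?g u) _ _ => apply (D_mult f g)
  | |- derivable_pt_lim (fun u => @?f u / @?g u) _ _ => apply (D_div f g)
  | |- derivable_pt_lim (fun u => - @?f u) _ _ => apply (D_opp f)
  | |- derivable_pt_lim (fun u => ln (sqrt (@?f u))) _ _ => apply (D_lnsqrt f)
  | |- derivable_pt_lim (fun u => sqrt (@?f u)) _ _ => apply (D_sqrt f)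
  | |- derivable_pt_lim (fun u => ln (@?f u)) _ _ => apply (D_ln f)
  | |- derivable_pt_lim (fun u => (@?f u) ^ 2) _ _ => apply (D_sq f)
  | |- derivable_pt_lim _ _ _ => eassumption
  end.
Ltac dsolve := repeat dstep.



Lemma D_cont f x l : derivable_pt_lim f x l -> continuity_pt f x.
Proof. intro H. apply derivable_continuous_pt. exists l; exact H. Qed.

Lemma cont_pos (f : R -> R) x : continuity_pt f x -> 0 < f x ->
  exists d, 0 < d /\ forall u, Rabs (u - x) < d -> 0 < f u.
Proof.
  intros Hc Hp. destruct (Hc (f x) Hp) as [alp [Ha H]].
  exists alp; split; auto. intros u Hu.
  destruct (Req_dec u x) as [->|Hne]; auto.
  assert (Hd := H u (conj (conj I (not_eq_sym Hne)) Hu)).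
  simpl in Hd. unfold R_dist in Hd. apply Rabs_def2 in Hd. lra.
Qed.

Lemma cont_neg (f : R -> R) x : continuity_pt f x -> f x < 0 ->
  exists d, 0 < d /\ forall u, Rabs (u - x) < d -> f u < 0.
Proof.
  intros Hc Hp. destruct (cont_pos (fun u => - f u) x) as [d [Hd H]].
  apply continuity_pt_opp; auto. lra. exists d; split; auto. intros u Hu. specialize (H u Hu). lra.
Qed.

Lemma sqrt_sq_abs x : sqrt (x^2) = Rabs x.
Proof. rewrite <- sqrt_Rsqr_abs. unfold Rsqr; f_equal; ring. Qed.

Lemma Csqrt_facts zr zi : 0 < sqrt (zr^2+zi^2) + zr ->
  0 < fst (Csqrt (zr,zi)) /\
  sqrt (zr^2+zi^2) = fst (Csqrt (zr,zi))^2 + snd (Csqrt (zr,zi))^2 /\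
  zr = fst (Csqrt (zr,zi))^2 - snd (Csqrt (zr,zi))^2 /\
  zi = 2 * fst (Csqrt (zr,zi)) * snd (Csqrt (zr,zi)).
Proof.
  intros H. unfold Csqrt, Cmod; cbn [fst snd].
  set (m := sqrt (zr^2+zi^2)) in *.
  assert (Hm0 : 0 <= m) by apply sqrt_pos.
  assert (Hm2 : m * m = zr^2 + zi^2) by (apply sqrt_sqrt; nra).
  assert (Hmz : zr <= m /\ - zr <= m).
  { split; apply Rsqr_incr_0_var; unfold Rsqr; try rewrite Hm2; try lra; nra. }
  assert (Ha2 : sqrt ((m+zr)/2) ^ 2 = (m+zr)/2) by (simpl; rewrite Rmult_1_r; apply sqrt_sqrt; lra).
  assert (Hb2 : sqrt ((m-zr)/2) ^ 2 = (m-zr)/2) by (simpl; rewrite Rmult_1_r; apply sqrt_sqrt; lra).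
  assert (Hsig : ((if Rlt_dec zi 0 then -1 else 1) ^ 2 = 1)) by (destruct (Rlt_dec zi 0); simpl; ring).
  split; [apply sqrt_lt_R0; lra|].
  split; [rewrite Rpow_mult_distr, Hsig, Ha2, Hb2; field|].
  split; [rewrite Rpow_mult_distr, Hsig, Ha2, Hb2; field|].
  assert (Hab : sqrt ((m+zr)/2) * sqrt ((m-zr)/2) = Rabs zi / 2).
  { rewrite <- sqrt_mult by lra. replace ((m + zr) / 2 * ((m - zr) / 2)) with ((zi/2)^2) by nra.
    rewrite sqrt_sq_abs. unfold Rdiv. rewrite Rabs_mult, (Rabs_pos_eq (/2)); lra. }
  transitivity ((if Rlt_dec zi 0 then -1 else 1) * (2 * (sqrt ((m+zr)/2) * sqrt ((m-zr)/2)))).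
  2: ring. rewrite Hab. destruct (Rlt_dec zi 0).
  - rewrite Rabs_left; lra.
  - rewrite Rabs_right; lra.
Qed.

Ltac side := cbv beta; try lra; try (apply pow_nonzero; lra); try (apply Rgt_not_eq; lra); try (apply Rlt_not_eq; lra).

Lemma pow2_gt_0 x : x <> 0 -> 0 < x ^ 2.
Proof. intro H. replace (x^2) with (Rsqr x) by (unfold Rsqr; ring). apply Rsqr_pos_lt; auto. Qed.

Lemma sqrt_gt_abs x y : y <> 0 -> Rabs x < sqrt (x^2 + y^2).
Proof.
  intros Hy. rewrite <- sqrt_sq_abs. apply sqrt_lt_1_alt. split.
  nra. assert (0 < y^2) by (apply pow2_gt_0; auto). lra.
Qed.

Lemma loc_ext (f g : R -> R) x d l : 0 < d ->
  (forall u, Rabs (u - x) < d -> f u = g u) ->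
  derivable_pt_lim f x l -> derivable_pt_lim g x l.
Proof.
  intros Hd H Hf. apply (derivable_pt_lim_locally_ext f g x (x - d) (x + d)); auto.
  lra. intros z Hz. apply H. apply Rabs_def1; lra.
Qed.

Lemma sq_deriv (Zr Zi : R -> R) t dZr dZi a b :
  derivable_pt_lim Zr t dZr -> derivable_pt_lim Zi t dZi ->
  (Zi t <> 0 \/ ((forall u, Zi u = 0) /\ 0 < Zr t)) ->
  a = fst (Csqrt (Zr t, Zi t)) -> b = snd (Csqrt (Zr t, Zi t)) ->
  derivable_pt_lim (fun u => fst (Csqrt (Zr u, Zi u))) t
     ((a * dZr + b * dZi) / (2 * (a^2 + b^2))) /\
  derivable_pt_lim (fun u => snd (Csqrt (Zr u, Zi u))) t
     ((a * dZi - b * dZr) / (2 * (a^2 + b^2))).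
Proof.
  intros HZr HZi Hc Ea Eb.
  assert (HP : 0 < sqrt (Zr t ^ 2 + Zi t ^ 2) + Zr t).
  { destruct Hc as [Hc|[Hc1 Hc2]].
    - assert (H := sqrt_gt_abs (Zr t) _ Hc). assert (H2 := Rle_abs (- Zr t)).
      rewrite Rabs_Ropp in H2. lra.
    - rewrite Hc1. replace (Zr t ^ 2 + 0 ^ 2) with (Zr t ^ 2) by ring.
      rewrite sqrt_sq_abs, Rabs_pos_eq; lra. }
  destruct (Csqrt_facts _ _ HP) as [Ha [Hm [Hr Hi]]].
  rewrite <- Ea in Ha, Hm, Hr, Hi. rewrite <- Eb in Hm, Hr, Hi.
  assert (HN : 0 < Zr t ^ 2 + Zi t ^ 2).
  { destruct Hc as [Hc|[Hc1 Hc2]].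
    - assert (0 < Zi t ^ 2) by (apply pow2_gt_0; auto). nra.
    - assert (0 < Zr t ^ 2) by (apply pow2_gt_0; lra). nra. }
  split.
  - change (derivable_pt_lim (fun u => sqrt ((sqrt (Zr u ^ 2 + Zi u ^ 2) + Zr u) / 2)) t
      ((a * dZr + b * dZi) / (2 * (a^2 + b^2)))).
    assert (Ea' : sqrt ((sqrt (Zr t ^ 2 + Zi t ^ 2) + Zr t) / 2) = a) by (rewrite Ea; reflexivity).
    eapply D_eq. dsolve. all: side.
    rewrite Ea', Hm, Hr, Hi. field. nra.
  - destruct Hc as [Hc|[Hc1 Hc2]].
    + assert (Hb : b <> 0) by (intro; apply Hc; rewrite Hi; subst; nra).
      assert (Hmr : 0 < (sqrt (Zr t ^ 2 + Zi t ^ 2) - Zr t) / 2).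
      { rewrite Hm, Hr. assert (0 < b^2) by (apply pow2_gt_0; auto). lra. }
      destruct (Rlt_dec (Zi t) 0) as [Hneg|Hpos].
      * destruct (cont_neg Zi t (D_cont _ _ _ HZi) Hneg) as [d [Hd Hdd]].
        assert (Eb' : sqrt ((sqrt (Zr t ^ 2 + Zi t ^ 2) - Zr t) / 2) = - b).
        { rewrite Eb. unfold Csqrt, Cmod; cbn [fst snd]. destruct (Rlt_dec (Zi t) 0); [ring|lra]. }
        apply (loc_ext (fun u => -1 * sqrt ((sqrt (Zr u ^ 2 + Zi u ^ 2) - Zr u) / 2)) _ t d); auto.
        { intros u Hu. unfold Csqrt, Cmod; cbn [fst snd]. destruct (Rlt_dec (Zi u) 0); auto.
          specialize (Hdd u Hu). lra. }
        eapply D_eq. dsolve. all: side.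
        rewrite Eb', Hm, Hr, Hi. field. split; auto. nra.
      * assert (Hpos' : 0 < Zi t) by lra.
        destruct (cont_pos Zi t (D_cont _ _ _ HZi) Hpos') as [d [Hd Hdd]].
        assert (Eb' : sqrt ((sqrt (Zr t ^ 2 + Zi t ^ 2) - Zr t) / 2) = b).
        { rewrite Eb. unfold Csqrt, Cmod; cbn [fst snd]. destruct (Rlt_dec (Zi t) 0); [lra|ring]. }
        apply (loc_ext (fun u => 1 * sqrt ((sqrt (Zr u ^ 2 + Zi u ^ 2) - Zr u) / 2)) _ t d); auto.
        { intros u Hu. unfold Csqrt, Cmod; cbn [fst snd]. destruct (Rlt_dec (Zi u) 0); auto.
          specialize (Hdd u Hu). lra. }
        eapply D_eq. dsolve. all: side.
        rewrite Eb', Hm, Hr, Hi. field. split; auto. nra.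
    + assert (HdZi : dZi = 0).
      { apply (uniqueness_limite Zi t); auto.
        apply (derivable_pt_lim_ext (fun _ => 0)); [intro; rewrite Hc1; auto| apply D_const]. }
      assert (Hb0 : b = 0) by (rewrite Hc1 in Hi; nra).
      destruct (cont_pos Zr t (D_cont _ _ _ HZr) Hc2) as [d [Hd Hdd]].
      apply (loc_ext (fun _ => 0) _ t d); auto.
      { intros u Hu. unfold Csqrt, Cmod; cbn [fst snd]. rewrite Hc1.
        replace (Zr u ^ 2 + 0 ^ 2) with (Zr u ^ 2) by ring.
        specialize (Hdd u Hu). rewrite sqrt_sq_abs, Rabs_pos_eq by lra.
        replace ((Zr u - Zr u) / 2) with 0 by field. rewrite sqrt_0. ring. }
      eapply D_eq. apply D_const. rewrite HdZi, Hb0. field. nra.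
Qed.


Definition zre X Y := 1 - 4 * X / (X^2 + Y^2).
Definition zim X Y := 4 * Y / (X^2 + Y^2).
Definition sA X Y := fst (Csqrt (zre X Y, zim X Y)).
Definition sB X Y := snd (Csqrt (zre X Y, zim X Y)).
Definition Ff X Y := ln (sqrt (X^2 + Y^2)) + 2 * ln (sqrt ((1 + sA X Y)^2 + sB X Y ^2))
   + /2 * (X * (1 - sA X Y) + Y * sB X Y).

Lemma Reps_eq mu lam e eps p :
  Reps mu lam e eps p = lam / eps^2 *
    (Ff (fst (nu mu lam e p)) (snd (nu mu lam e p)) - mu * norm3 p / lam^2).
Proof.
  unfold Reps, Ff, sA, sB. set (X := fst (nu mu lam e p)). set (Y := snd (nu mu lam e p)).
  replace (nu mu lam e p) with (X, Y) by (unfold X, Y; destruct (nu mu lam e p); reflexivity).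
  replace (Csub (Cofr 1) (Cmul (Cofr 4) (Cinv (X, Y)))) with (zre X Y, zim X Y).
  2:{ unfold Csub, Cofr, Cmul, Cinv, zre, zim; cbn [fst snd]. f_equal; unfold Rdiv; ring. }
  set (s := Csqrt (zre X Y, zim X Y)). unfold Cmod, Cadd, Cofr, Cre, Cmul, Csub; cbn [fst snd].
  rewrite Rplus_0_l. ring.
Qed.

Definition dZr X Y dX dY := - ((4 * dX * (X^2+Y^2) - (2*X*dX + 2*Y*dY) * (4 * X)) / (X^2+Y^2)^2).
Definition dZi X Y dX dY := (4 * dY * (X^2+Y^2) - (2*X*dX + 2*Y*dY) * (4 * Y)) / (X^2+Y^2)^2.
Definition dA X Y dX dY := (sA X Y * dZr X Y dX dY + sB X Y * dZi X Y dX dY) / (2 * (sA X Y ^ 2 + sB X Y ^ 2)).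
Definition dB X Y dX dY := (sA X Y * dZi X Y dX dY - sB X Y * dZr X Y dX dY) / (2 * (sA X Y ^ 2 + sB X Y ^ 2)).

Lemma AB_deriv (X Y : R -> R) t dX dY :
  derivable_pt_lim X t dX -> derivable_pt_lim Y t dY ->
  0 < X t^2 + Y t^2 ->
  (Y t <> 0 \/ ((forall u, Y u = 0) /\ (X t < 0 \/ 4 < X t))) ->
  derivable_pt_lim (fun u => sA (X u) (Y u)) t (dA (X t) (Y t) dX dY) /\
  derivable_pt_lim (fun u => sB (X u) (Y u)) t (dB (X t) (Y t) dX dY).
Proof.
  intros HX HY HN Hc.
  assert (HZr : derivable_pt_lim (fun u => zre (X u) (Y u)) t (dZr (X t) (Y t) dX dY)).
  { unfold zre, dZr. eapply D_eq. dsolve. all: side. all: field; side. }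
  assert (HZi : derivable_pt_lim (fun u => zim (X u) (Y u)) t (dZi (X t) (Y t) dX dY)).
  { unfold zim, dZi. eapply D_eq. dsolve. all: side. all: field; side. }
  assert (Hc' : zim (X t) (Y t) <> 0 \/ ((forall u, zim (X u) (Y u) = 0) /\ 0 < zre (X t) (Y t))).
  { destruct Hc as [Hc|[Hc1 Hc2]].
    - left. unfold zim. intro H. apply Hc.
      replace (Y t) with (4 * Y t / (X t^2+Y t^2) * (X t^2+Y t^2) / 4) by (field; lra). rewrite H. field.
    - right. split. intro u. unfold zim. rewrite Hc1. unfold Rdiv; ring.
      unfold zre. rewrite Hc1. rewrite Hc1 in HN. replace (X t ^ 2 + 0 ^ 2) with (X t ^ 2) by ring.
      destruct Hc2 as [Hc2|Hc2].
      + assert (0 < - 4 * X t / X t ^ 2). { apply Rdiv_lt_0_compat; nra. } lra.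
      + replace (4 * X t / X t ^ 2) with (4 / X t) by (field; lra).
        assert (4 / X t < 1). { apply Rmult_lt_reg_r with (X t). lra. field_simplify; lra. } lra. }
  apply (sq_deriv (fun u => zre (X u) (Y u)) (fun u => zim (X u) (Y u)) t _ _ _ _ HZr HZi Hc' eq_refl eq_refl).
Qed.

Lemma F_deriv (X Y : R -> R) t dX dY :
  derivable_pt_lim X t dX -> derivable_pt_lim Y t dY ->
  0 < X t^2 + Y t^2 ->
  (Y t <> 0 \/ ((forall u, Y u = 0) /\ (X t < 0 \/ 4 < X t))) ->
  derivable_pt_lim (fun u => Ff (X u) (Y u)) t
    (/2 * ((1 - sA (X t) (Y t)) * dX + sB (X t) (Y t) * dY)).
Proof.
  intros HX HY HN Hc.
  pose (N := X t ^ 2 + Y t ^ 2).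
  set (dN := 2 * X t * dX + 2 * Y t * dY).
  assert (HZr : derivable_pt_lim (fun u => zre (X u) (Y u)) t (- ((4 * dX * N - dN * (4 * X t)) / N^2))).
  { unfold zre. eapply D_eq. dsolve. all: side. unfold dN, N. field. side. }
  assert (HZi : derivable_pt_lim (fun u => zim (X u) (Y u)) t ((4 * dY * N - dN * (4 * Y t)) / N^2)).
  { unfold zim. eapply D_eq. dsolve. all: side. unfold dN, N. field. side. }
  set (a := sA (X t) (Y t)). set (b := sB (X t) (Y t)).
  assert (Hc' : zim (X t) (Y t) <> 0 \/ ((forall u, zim (X u) (Y u) = 0) /\ 0 < zre (X t) (Y t))).
  { destruct Hc as [Hc|[Hc1 Hc2]].
    - left. unfold zim. intro H. apply Hc.
      replace (Y t) with (4 * Y t / (X t^2+Y t^2) * (X t^2+Y t^2) / 4) by (field; lra). rewrite H. field.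
    - right. split. intro u. unfold zim. rewrite Hc1. unfold Rdiv; ring.
      unfold zre. rewrite Hc1. rewrite Hc1 in HN. replace (X t ^ 2 + 0 ^ 2) with (X t ^ 2) by ring.
      destruct Hc2 as [Hc2|Hc2].
      + assert (0 < - 4 * X t / X t ^ 2). { apply Rdiv_lt_0_compat; nra. } lra.
      + replace (4 * X t / X t ^ 2) with (4 / X t) by (field; lra).
        assert (4 / X t < 1). { apply Rmult_lt_reg_r with (X t). lra. field_simplify; lra. } lra. }
  destruct (sq_deriv (fun u => zre (X u) (Y u)) (fun u => zim (X u) (Y u)) t _ _ a b HZr HZi Hc'
     eq_refl eq_refl) as [Ha Hb].
  assert (HP : 0 < sqrt (zre (X t) (Y t) ^ 2 + zim (X t) (Y t) ^ 2) + zre (X t) (Y t)).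
  { destruct Hc' as [Hc'|[Hc1 Hc2]].
    - assert (H := sqrt_gt_abs (zre (X t) (Y t)) _ Hc'). assert (H2 := Rle_abs (- zre (X t) (Y t))).
      rewrite Rabs_Ropp in H2. lra.
    - rewrite Hc1. replace (zre (X t) (Y t) ^ 2 + 0 ^ 2) with (zre (X t) (Y t) ^ 2) by ring.
      rewrite sqrt_sq_abs, Rabs_pos_eq; lra. }
  destruct (Csqrt_facts _ _ HP) as [Ha0 [Hm [Hr Hi]]].
  fold (sA (X t) (Y t)) (sB (X t) (Y t)) a b in Ha0, Hm, Hr, Hi.
  unfold Ff.
  change (derivable_pt_lim (fun u => ln (sqrt (X u ^ 2 + Y u ^ 2)) +
     2 * ln (sqrt ((1 + (fun v => fst (Csqrt (zre (X v) (Y v), zim (X v) (Y v)))) u) ^ 2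
                   + (fun v => snd (Csqrt (zre (X v) (Y v), zim (X v) (Y v)))) u ^ 2)) +
     / 2 * (X u * (1 - (fun v => fst (Csqrt (zre (X v) (Y v), zim (X v) (Y v)))) u)
            + Y u * (fun v => snd (Csqrt (zre (X v) (Y v), zim (X v) (Y v)))) u)) t
     (/ 2 * ((1 - a) * dX + b * dY))).
  set (A := fun v => fst (Csqrt (zre (X v) (Y v), zim (X v) (Y v)))) in *.
  set (B := fun v => snd (Csqrt (zre (X v) (Y v), zim (X v) (Y v)))) in *.
  eapply D_eq. dsolve. all: side.
  all: change (A t) with a; change (B t) with b.
  nra.
  assert (HN' : N = X t ^ 2 + Y t ^ 2) by reflexivity.
  assert (E1 : X t = (1 - a^2 + b^2) * N / 4).
  { unfold zre in Hr. fold N in Hr. replace (X t) with ((4 * X t / N) * N / 4) by (field; unfold N; lra).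
    f_equal. f_equal. lra. }
  assert (E2 : Y t = (2 * a * b) * N / 4).
  { unfold zim in Hi. fold N in Hi. replace (Y t) with ((4 * Y t / N) * N / 4) by (field; unfold N; lra).
    rewrite Hi. reflexivity. }
  assert (HNp : 0 < N) by (unfold N; lra).
  unfold dN. rewrite E1, E2. rewrite E1, E2 in HN'.
  clearbody N. clear HX HY Ha Hb HZr HZi Hc Hc' HP Hm Hr Hi E1 E2 HN A B.
  set (D := (1 - a^2 + b^2)^2 + (2*a*b)^2).
  assert (E3 : N = 16 / D).
  { assert (HD : D * N = 16).
    { apply Rmult_eq_reg_l with N; [|lra].
      replace (N * (D * N)) with (16 * (((1 - a ^ 2 + b ^ 2) * N / 4) ^ 2 + (2 * a * b * N / 4) ^ 2))
        by (unfold D; field). rewrite <- HN'. ring. }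
    assert (D <> 0) by (intro H0; rewrite H0 in HD; lra).
    rewrite <- HD. field. auto. }
  assert (HD : 0 < D).
  { assert (HD : D * N = 16) by (rewrite E3; field; intro H0; rewrite H0 in E3; unfold Rdiv in E3; rewrite Rinv_0 in E3; lra).
    nra. }
  rewrite E3. clear E3 HN'.
  assert (0 < (1 + a)^2 + b^2) by nra.
  assert (0 < a^2+b^2) by nra.
  unfold D in *. field. repeat split; nra.
Qed.


Lemma path_dd mu lam e eps p h val :
  0 < lam -> eps <> 0 -> e <> 0 ->
  0 < px p ^2 + py p ^2 + pz p ^2 ->
  let X := fun u => fst (nu mu lam e (add3 p (scal3 u h))) in
  let Y := fun u => snd (nu mu lam e (add3 p (scal3 u h))) in
  let r := fun u => norm3 (add3 p (scal3 u h)) in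
  0 < X 0 ^2 + Y 0 ^2 ->
  (Y 0 <> 0 \/ ((py p = 0 /\ py h = 0) /\ (X 0 < 0 \/ 4 < X 0))) ->
  let c := mu / lam^2 in let k := sqrt (1 - e^2) in
  let P := px p * px h + py p * py h + pz p * pz h in
  let H := px h^2 + py h^2 + pz h^2 in
  let dr0 := P / r 0 in
  let ddr0 := (H * r 0 - dr0 * P) / (r 0)^2 in
  let dX0 := c * (dr0 - px h / e) in
  let dY := c * (- (py h * k / e)) in
  val = lam * (/2 * (- dA (X 0) (Y 0) dX0 dY * dX0 + (1 - sA (X 0) (Y 0)) * (c * ddr0)
                     + dB (X 0) (Y 0) dX0 dY * dY) - mu * ddr0 / lam^2) ->
  second_dir_deriv (fun q => eps^2 * Reps mu lam e eps q) p h val.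
Proof.
  intros Hlam Heps He HQ0 X Y r HN0 Hc c k P H dr0 ddr0 dX0 dY Hval.
  pose (Q := fun u => (px p + u * px h)^2 + (py p + u * py h)^2 + (pz p + u * pz h)^2).
  assert (Er : forall u, r u = sqrt (Q u)) by reflexivity.
  assert (EX : forall u, X u = c * (r u - (px p + u * px h) / e)) by reflexivity.
  assert (EY : forall u, Y u = c * (- ((py p + u * py h) * k / e))) by reflexivity.
  pose (dr := fun u => (P + u * H) / r u).
  assert (Hr : forall u, 0 < Q u -> derivable_pt_lim r u (dr u)).
  { intros u Hu. apply (derivable_pt_lim_ext (fun u => sqrt (Q u))); [intro; symmetry; apply Er|].
    unfold dr, Q. eapply D_eq. dsolve. exact Hu.
    assert (Hs: 0 < sqrt (Q u)) by (apply sqrt_lt_R0; auto). change (r u) with (sqrt (Q u)).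
    unfold Q in *. unfold P, H. field. lra. }
  assert (HX : forall u, 0 < Q u -> derivable_pt_lim X u (c * (dr u - px h / e))).
  { intros u Hu. apply (derivable_pt_lim_ext (fun u => c * (r u - (px p + u * px h) / e))); [intro; symmetry; apply EX|].
    eapply D_eq. dsolve. apply Hr; auto. all: side. field. auto. }
  assert (HY : forall u, derivable_pt_lim Y u dY).
  { intros u. apply (derivable_pt_lim_ext (fun u => c * (- ((py p + u * py h) * k / e)))); [intro; symmetry; apply EY|].
    eapply D_eq. dsolve. all: side. unfold dY. field. auto. }
  assert (HQ : derivable_pt_lim Q 0 (2 * P)).
  { unfold Q. eapply D_eq. dsolve. unfold P. ring. }
  assert (EQ0 : Q 0 = px p ^2 + py p ^2 + pz p ^2) by (unfold Q; ring).
  destruct (cont_pos Q 0 (D_cont _ _ _ HQ)) as [d1 [Hd1 Hdd1]]; [lra|].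
  assert (HXd0 := HX 0 ltac:(lra)).
  assert (HN : derivable_pt_lim (fun u => X u ^ 2 + Y u ^ 2) 0
                 (2 * X 0 * (c * (dr 0 - px h / e)) + 2 * Y 0 * dY)).
  { eapply D_eq. dsolve. apply HY. ring. }
  destruct (cont_pos _ 0 (D_cont _ _ _ HN) HN0) as [d2 [Hd2 Hdd2]].
  assert (Hd3 : exists d3, 0 < d3 /\ forall u, Rabs (u - 0) < d3 ->
     (Y u <> 0 \/ ((forall v, Y v = 0) /\ (X u < 0 \/ 4 < X u)))).
  { destruct Hc as [Hc|[[Hp Hh] Hc]].
    - assert (HY2 : derivable_pt_lim (fun u => Y u ^ 2) 0 (2 * Y 0 * dY)).
      { eapply D_eq. dsolve. apply HY. ring. }
      destruct (cont_pos _ 0 (D_cont _ _ _ HY2)) as [d3 [Hd3 Hdd3]].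
      { apply pow2_gt_0; auto. }
      exists d3; split; auto. intros u Hu. left. specialize (Hdd3 u Hu). cbv beta in Hdd3.
      intro H0. rewrite H0 in Hdd3. lra.
    - assert (HY0 : forall v, Y v = 0).
      { intro v. rewrite EY, Hp, Hh. field. auto. }
      destruct Hc as [Hc|Hc].
      + destruct (cont_neg X 0 (D_cont _ _ _ HXd0) Hc) as [d3 [Hd3 Hdd3]].
        exists d3; split; [auto|]. intros u Hu. right. split; auto.
      + assert (HX4 : derivable_pt_lim (fun u => X u - 4) 0 (c * (dr 0 - px h / e))).
        { eapply D_eq. dsolve. ring. }
        destruct (cont_pos _ 0 (D_cont _ _ _ HX4)) as [d3 [Hd3 Hdd3]]. cbv beta; lra.
        exists d3; split; [auto|]. intros u Hu. right. split; auto. right. specialize (Hdd3 u Hu).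
        cbv beta in Hdd3. lra. }
  destruct Hd3 as [d3 [Hd3 Hdd3]].
  pose (g' := fun u => lam * (/2 * ((1 - sA (X u) (Y u)) * (c * (dr u - px h / e))
                              + sB (X u) (Y u) * dY) - mu * dr u / lam^2)).
  exists g'. split.
  - exists (Rmin d1 (Rmin d2 d3)). split.
    { apply Rmin_pos; auto. apply Rmin_pos; auto. }
    intros u Hu.
    assert (Hu1 : Rabs (u - 0) < d1).
    { rewrite Rminus_0_r. eapply Rlt_le_trans; [exact Hu| apply Rmin_l]. }
    assert (Hu2 : Rabs (u - 0) < d2).
    { rewrite Rminus_0_r. eapply Rlt_le_trans; [exact Hu|]. eapply Rle_trans; [apply Rmin_r| apply Rmin_l]. }
    assert (Hu3 : Rabs (u - 0) < d3).
    { rewrite Rminus_0_r. eapply Rlt_le_trans; [exact Hu|]. eapply Rle_trans; [apply Rmin_r| apply Rmin_r]. }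
    specialize (Hdd1 u Hu1). specialize (Hdd2 u Hu2). specialize (Hdd3 u Hu3). cbv beta in Hdd2.
    assert (HF := F_deriv X Y u _ _ (HX u Hdd1) (HY u) Hdd2 Hdd3).
    apply (derivable_pt_lim_ext (fun s => lam * (Ff (X s) (Y s) - mu * r s / lam^2))).
    { intro z. rewrite Reps_eq. change (fst (nu mu lam e (add3 p (scal3 z h)))) with (X z). change (snd (nu mu lam e (add3 p (scal3 z h)))) with (Y z). change (norm3 (add3 p (scal3 z h))) with (r z). field. split; auto; lra. }
    assert (Hru := Hr u Hdd1).
    eapply D_eq. dsolve. all: side. unfold g'. field. lra.
  - destruct (AB_deriv X Y 0 _ _ HXd0 (HY 0) HN0 (Hdd3 0 ltac:(rewrite Rminus_0_r, Rabs_R0; lra)))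
      as [HA HB].
    assert (Hr0 := Hr 0 ltac:(lra)).
    assert (Hrpos : 0 < r 0) by (rewrite Er; apply sqrt_lt_R0; lra).
    assert (Hdr : derivable_pt_lim dr 0 ddr0).
    { unfold dr, ddr0, dr0. eapply D_eq. dsolve. all: side. unfold dr. field. lra. }
    unfold g'. eapply D_eq. dsolve. all: side.
    assert (Edr : dr 0 = dr0) by (unfold dr, dr0; f_equal; ring). rewrite Edr.
    change (c * (dr0 - px h / e)) with dX0. rewrite Hval. field. lra.
Qed.


Lemma Csqrt_char zr zi a b : 0 < a -> zr = a^2 - b^2 -> zi = 2*a*b ->
  fst (Csqrt (zr, zi)) = a /\ snd (Csqrt (zr, zi)) = b.
Proof.
  intros Ha Hr Hi. unfold Csqrt, Cmod; cbn [fst snd].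
  assert (Hm : sqrt (zr^2 + zi^2) = a^2 + b^2).
  { replace (zr^2+zi^2) with ((a^2+b^2)^2) by (rewrite Hr, Hi; ring).
    rewrite sqrt_sq_abs. apply Rabs_pos_eq. nra. }
  rewrite Hm. split.
  - replace ((a^2+b^2+zr)/2) with (a^2) by (rewrite Hr; field).
    rewrite sqrt_sq_abs. apply Rabs_pos_eq. lra.
  - replace ((a^2+b^2-zr)/2) with (b^2) by (rewrite Hr; field).
    rewrite sqrt_sq_abs. destruct (Rlt_dec zi 0).
    + rewrite Rabs_left. ring. rewrite Hi in r. nra.
    + rewrite Rabs_pos_eq. ring. rewrite Hi in n. nra.
Qed.

Lemma dAB_eq X Y dX dY a b : 0 < X^2+Y^2 -> 0 < a ->
  zre X Y = a^2-b^2 -> zim X Y = 2*a*b -> sA X Y = a -> sB X Y = b ->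
  let u := 1 - a^2 + b^2 in let w := -2*a*b in
  let U := u^2 - w^2 in let W := 2*u*w in
  let m1 := dX*U - dY*W in let m2 := dX*W + dY*U in
  dA X Y dX dY = (m1*a + m2*b)/(8*(a^2+b^2)) /\ dB X Y dX dY = (m2*a - m1*b)/(8*(a^2+b^2)).
Proof.
  intros HN Ha Hr Hi EA EB u w U W m1 m2.
  pose (N := X^2+Y^2).
  assert (E1 : X = (1 - a^2 + b^2) * N / 4).
  { unfold zre in Hr. fold N in Hr. replace X with ((4 * X / N) * N / 4) by (field; unfold N; lra).
    f_equal. f_equal. lra. }
  assert (E2 : Y = (2 * a * b) * N / 4).
  { unfold zim in Hi. fold N in Hi. replace Y with ((4 * Y / N) * N / 4) by (field; unfold N; lra).
    rewrite Hi. reflexivity. }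
  assert (HN' : N = X ^ 2 + Y ^ 2) by reflexivity.
  assert (HNp : 0 < N) by (unfold N; lra).
  unfold dA, dB, dZr, dZi. rewrite EA, EB. rewrite E1, E2. rewrite E1, E2 in HN'.
  clearbody N. clear Hr Hi EA EB E1 E2.
  set (D := (1 - a^2 + b^2)^2 + (2*a*b)^2).
  assert (E3 : N = 16 / D).
  { assert (HD : D * N = 16).
    { apply Rmult_eq_reg_l with N; [|lra].
      replace (N * (D * N)) with (16 * (((1 - a ^ 2 + b ^ 2) * N / 4) ^ 2 + (2 * a * b * N / 4) ^ 2))
        by (unfold D; field). rewrite <- HN'. ring. }
    assert (D <> 0) by (intro H0; rewrite H0 in HD; lra).
    rewrite <- HD. field. auto. }
  assert (HD : 0 < D).
  { assert (HD : D * N = 16) by (rewrite E3; field; intro H0; rewrite H0 in E3; unfold Rdiv in E3; rewrite Rinv_0 in E3; lra).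
    nra. }
  rewrite E3. clear E3 HN'.
  assert (0 < a^2+b^2) by nra.
  unfold m1, m2, U, W, u, w. unfold D in *. split; field; repeat split; nra.
Qed.


Ltac nsat := repeat match goal with x := _ |- _ => clearbody x end;
  repeat match goal with H : ?P |- _ => lazymatch P with @eq R _ _ => fail | R => fail | _ => clear H end end;
  repeat match goal with x : R |- _ => clear x end;
  simpl in *; nsatz.

Lemma nhat_case mu lam e eps v : 0 < mu -> 0 < lam -> 0 < e < 1 -> 0 < eps ->
  second_dir_deriv (fun q => eps^2 * Reps mu lam e eps q) (xell mu lam e v) (nhat e v)
   (- (mu ^ 2 / lam ^ 3) *
              ((1 + e * cos v) / ((1 - e * cos v) * (1 + e ^ 2 + 2 * e * cos v)))).
Proof.
  intros Hmu Hlam He Heps.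
  assert (HSC : sin v^2 = 1 - cos v^2) by (rewrite <- (sin2_cos2 v); unfold Rsqr; ring).
  assert (Hk : sqrt (1 - e^2)^2 = 1 - e^2) by (rewrite <- Rsqr_pow2, Rsqr_sqrt; nra).
  assert (Hk0 : 0 < sqrt (1 - e^2)) by (apply sqrt_lt_R0; nra).
  assert (HC1 : -1 <= cos v <= 1) by (split; [apply COS_bound| apply COS_bound]).
  assert (Hd : sqrt (1 - e^2 * cos v ^2)^2 = 1 - e^2 * cos v^2) by (rewrite <- Rsqr_pow2, Rsqr_sqrt; nra).
  assert (Hd0 : 0 < sqrt (1 - e^2 * cos v ^2)) by (apply sqrt_lt_R0; nra).
  assert (HA : 0 < lam^2/mu) by (apply Rdiv_lt_0_compat; nra).
  apply path_dd; auto; [lra|lra| | | |].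
  all: cbv beta zeta; unfold xell, nhat, nu, norm3, add3, scal3, px, py, pz; cbn [fst snd].
  all: rewrite ?Rmult_0_l, ?Rplus_0_r, ?Rplus_0_l.
  all: set (Cv := cos v) in *; set (Sv := sin v) in *; set (k := sqrt (1 - e^2)) in *;
       set (d := sqrt (1 - e^2 * Cv^2)) in *; set (A := lam^2/mu) in *.
  all: assert (Hnorm : sqrt ((A * Cv - A * e) ^ 2 + (A * k * Sv) ^ 2 + 0 ^ 2) = A * (1 - e * Cv))
    by (replace ((A * Cv - A * e) ^ 2 + (A * k * Sv) ^ 2 + 0 ^ 2) with ((A * (1 - e*Cv))^2)
           by nsat; rewrite sqrt_sq_abs; apply Rabs_pos_eq; nra).
  all: try rewrite Hnorm.
  all: assert (Hcinv : mu / lam^2 = / A) by (unfold A; field; lra).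
  all: rewrite ?Hcinv.
  all: assert (HeC : 0 < 1 - e * Cv) by nra.
  all: assert (HX0 : / A * (A * (1 - e * Cv) - (A * Cv - A * e) / e) = (2*e - (1+e^2)*Cv)/e)
        by (field; lra).
  all: assert (HY0 : / A * - (A * k * Sv * k / e) = - (1 - e^2) * Sv / e)
        by (replace (/ A * - (A * k * Sv * k / e)) with (- (k^2) * Sv / e) by (field; lra); rewrite Hk; reflexivity).
  all: rewrite ?HX0, ?HY0.
  all: assert (HN0e : ((2*e - (1+e^2)*Cv)/e)^2 + (- (1 - e^2) * Sv / e)^2 = (((1+e^2) - 2*e*Cv)/e)^2)
        by (field_simplify_eq; [nsat|lra]).
  all: assert (HN0 : 0 < ((2*e - (1+e^2)*Cv)/e)^2 + (- (1 - e^2) * Sv / e)^2)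
        by (rewrite HN0e; apply pow2_gt_0; apply Rgt_not_eq; apply Rdiv_lt_0_compat; nra).
  - assert (HQ : (A * Cv - A * e) ^ 2 + (A * k * Sv) ^ 2 + 0 ^ 2 = (A * (1 - e*Cv))^2) by nsat.
    rewrite HQ. apply pow2_gt_0. nra.
  - exact HN0.
  - destruct (Req_dec Sv 0) as [HS0|HS0].
    + right. split. split. rewrite HS0; ring. rewrite HS0; unfold Rdiv; ring.
      rewrite HS0 in HSC. assert (HC : (Cv - 1) * (Cv + 1) = 0) by nra.
      destruct (Rmult_integral _ _ HC) as [HC'|HC'].
      * left. replace Cv with 1 by lra. apply Rmult_lt_reg_r with e; [lra|].
        field_simplify; nra.
      * right. replace Cv with (-1) by lra. apply Rmult_lt_reg_r with e; [lra|].
        field_simplify; nra.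
    + left. intro H0. apply HS0.
      replace Sv with (- (1 - e^2) * Sv / e * (- e / (1 - e^2))) by (field; nra).
      rewrite H0. ring.
  - assert (EPraw : (A*Cv - A*e)*(k*Cv/d) + A*k*Sv*(Sv/d) = A*k*(1-e*Cv)/d)
      by (field_simplify_eq; [nsat|lra]).
    assert (EH : (k*Cv/d)^2 + (Sv/d)^2 + 0^2 = 1) by (field_simplify_eq; [nsat|lra]).
    rewrite EPraw, EH.
    set (X0 := (2 * e - (1 + e ^ 2) * Cv) / e) in *.
    set (Y0 := - (1 - e ^ 2) * Sv / e) in *.
    set (D0 := 1 - 2*e*Cv + e^2).
    assert (HD0 : 0 < D0) by (unfold D0; nra).
    set (a0 := (1 - e^2) / D0). set (b0 := -2 * e * Sv / D0).
    assert (Ha0 : 0 < a0) by (unfold a0; apply Rdiv_lt_0_compat; nra).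
    assert (Hzr : zre X0 Y0 = a0^2 - b0^2).
    { unfold zre. rewrite HN0e. unfold X0, a0, b0, D0. field_simplify_eq. nsat. split; nra. }
    assert (Hzi : zim X0 Y0 = 2*a0*b0).
    { unfold zim. rewrite HN0e. unfold Y0, a0, b0, D0. field_simplify_eq. nsat. split; nra. }
    destruct (Csqrt_char _ _ _ _ Ha0 Hzr Hzi) as [EA EB].
    fold (sA X0 Y0) in EA. fold (sB X0 Y0) in EB.
    rewrite (proj1 (dAB_eq X0 Y0 _ _ a0 b0 HN0 Ha0 Hzr Hzi EA EB)).
    rewrite (proj2 (dAB_eq X0 Y0 _ _ a0 b0 HN0 Ha0 Hzr Hzi EA EB)).
    rewrite EA. unfold a0, b0, D0. unfold A.
    assert (H1 : 0 < 1 + e ^ 2 + 2 * e * Cv) by nra.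
    assert (H2 : 0 < 1 - 2 * e * Cv + e ^ 2) by nra.
    field_simplify_eq.
    nsat.
    repeat split; try lra; try nra.
Qed.

Lemma khat_case mu lam e eps v : 0 < mu -> 0 < lam -> 0 < e < 1 -> 0 < eps ->
  second_dir_deriv (fun q => eps^2 * Reps mu lam e eps q) (xell mu lam e v) khat
   (- (mu ^ 2 / lam ^ 3) * (1 / (1 + e ^ 2 - 2 * e * cos v))).
Proof.
  intros Hmu Hlam He Heps.
  assert (HSC : sin v^2 = 1 - cos v^2) by (rewrite <- (sin2_cos2 v); unfold Rsqr; ring).
  assert (Hk : sqrt (1 - e^2)^2 = 1 - e^2) by (rewrite <- Rsqr_pow2, Rsqr_sqrt; nra).
  assert (Hk0 : 0 < sqrt (1 - e^2)) by (apply sqrt_lt_R0; nra).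
  assert (HC1 : -1 <= cos v <= 1) by (split; [apply COS_bound| apply COS_bound]).
  assert (Hd : sqrt (1 - e^2 * cos v ^2)^2 = 1 - e^2 * cos v^2) by (rewrite <- Rsqr_pow2, Rsqr_sqrt; nra).
  assert (Hd0 : 0 < sqrt (1 - e^2 * cos v ^2)) by (apply sqrt_lt_R0; nra).
  assert (HA : 0 < lam^2/mu) by (apply Rdiv_lt_0_compat; nra).
  apply path_dd; auto; [lra|lra| | | |].
  all: cbv beta zeta; unfold xell, khat, nu, norm3, add3, scal3, px, py, pz; cbn [fst snd].
  all: rewrite ?Rmult_0_l, ?Rmult_0_r, ?Rplus_0_r, ?Rplus_0_l.
  all: set (Cv := cos v) in *; set (Sv := sin v) in *; set (k := sqrt (1 - e^2)) in *;
       set (d := sqrt (1 - e^2 * Cv^2)) in *; set (A := lam^2/mu) in *.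
  all: assert (Hnorm : sqrt ((A * Cv - A * e) ^ 2 + (A * k * Sv) ^ 2 + 0 ^ 2) = A * (1 - e * Cv))
    by (replace ((A * Cv - A * e) ^ 2 + (A * k * Sv) ^ 2 + 0 ^ 2) with ((A * (1 - e*Cv))^2)
           by nsat; rewrite sqrt_sq_abs; apply Rabs_pos_eq; nra).
  all: try rewrite Hnorm.
  all: assert (Hcinv : mu / lam^2 = / A) by (unfold A; field; lra).
  all: rewrite ?Hcinv.
  all: assert (HeC : 0 < 1 - e * Cv) by nra.
  all: assert (HX0 : / A * (A * (1 - e * Cv) - (A * Cv - A * e) / e) = (2*e - (1+e^2)*Cv)/e)
        by (field; lra).
  all: assert (HY0 : / A * - (A * k * Sv * k / e) = - (1 - e^2) * Sv / e)
        by (replace (/ A * - (A * k * Sv * k / e)) with (- (k^2) * Sv / e) by (field; lra); rewrite Hk; reflexivity).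
  all: rewrite ?HX0, ?HY0.
  all: assert (HN0e : ((2*e - (1+e^2)*Cv)/e)^2 + (- (1 - e^2) * Sv / e)^2 = (((1+e^2) - 2*e*Cv)/e)^2)
        by (field_simplify_eq; [nsat|lra]).
  all: assert (HN0 : 0 < ((2*e - (1+e^2)*Cv)/e)^2 + (- (1 - e^2) * Sv / e)^2)
        by (rewrite HN0e; apply pow2_gt_0; apply Rgt_not_eq; apply Rdiv_lt_0_compat; nra).
  - assert (HQ : (A * Cv - A * e) ^ 2 + (A * k * Sv) ^ 2 + 0 ^ 2 = (A * (1 - e*Cv))^2) by nsat.
    rewrite HQ. apply pow2_gt_0. nra.
  - exact HN0.
  - destruct (Req_dec Sv 0) as [HS0|HS0].
    + right. split. split. rewrite HS0; ring. reflexivity.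
      rewrite HS0 in HSC. assert (HC : (Cv - 1) * (Cv + 1) = 0) by nra.
      destruct (Rmult_integral _ _ HC) as [HC'|HC'].
      * left. replace Cv with 1 by lra. apply Rmult_lt_reg_r with e; [lra|].
        field_simplify; nra.
      * right. replace Cv with (-1) by lra. apply Rmult_lt_reg_r with e; [lra|].
        field_simplify; nra.
    + left. intro H0. apply HS0.
      replace Sv with (- (1 - e^2) * Sv / e * (- e / (1 - e^2))) by (field; nra).
      rewrite H0. ring.
  - set (X0 := (2 * e - (1 + e ^ 2) * Cv) / e) in *.
    set (Y0 := - (1 - e ^ 2) * Sv / e) in *.
    set (D0 := 1 - 2*e*Cv + e^2).
    assert (HD0 : 0 < D0) by (unfold D0; nra).
    set (a0 := (1 - e^2) / D0). set (b0 := -2 * e * Sv / D0).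
    assert (Ha0 : 0 < a0) by (unfold a0; apply Rdiv_lt_0_compat; nra).
    assert (Hzr : zre X0 Y0 = a0^2 - b0^2).
    { unfold zre. rewrite HN0e. unfold X0, a0, b0, D0. field_simplify_eq. nsat. split; nra. }
    assert (Hzi : zim X0 Y0 = 2*a0*b0).
    { unfold zim. rewrite HN0e. unfold Y0, a0, b0, D0. field_simplify_eq. nsat. split; nra. }
    destruct (Csqrt_char _ _ _ _ Ha0 Hzr Hzi) as [EA EB].
    fold (sA X0 Y0) in EA. fold (sB X0 Y0) in EB.
    rewrite (proj1 (dAB_eq X0 Y0 _ _ a0 b0 HN0 Ha0 Hzr Hzi EA EB)).
    rewrite (proj2 (dAB_eq X0 Y0 _ _ a0 b0 HN0 Ha0 Hzr Hzi EA EB)).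
    rewrite EA. unfold a0, b0, D0. unfold A.
    assert (H1 : 0 < 1 + e ^ 2 + 2 * e * Cv) by nra.
    assert (H2 : 0 < 1 - 2 * e * Cv + e ^ 2) by nra.
    field_simplify_eq.
    nsat.
    repeat split; try lra; try nra.
Qed.


Lemma std_lem m L q : 0 < m -> 0 < L -> 0 < q -> / sqrt (m^2/L/q) = sqrt L / m * sqrt q.
Proof.
  intros Hm HL Hq.
  assert (Hx : 0 < m^2/L/q) by (apply Rdiv_lt_0_compat; [apply Rdiv_lt_0_compat|]; nra).
  assert (Hs := sqrt_lt_R0 _ Hx).
  assert (E : sqrt L * sqrt q * sqrt (m^2/L/q) = m).
  { rewrite <- !sqrt_mult by nra. replace (L * q * (m ^ 2 / L / q)) with (m^2) by (field; lra).
    rewrite sqrt_sq_abs. apply Rabs_pos_eq; lra. }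
  apply Rmult_eq_reg_r with (sqrt (m ^ 2 / L / q)); [|lra].
  rewrite Rinv_l by lra. replace (sqrt L / m * sqrt q * sqrt (m ^ 2 / L / q))
    with ((sqrt L * sqrt q * sqrt (m ^ 2 / L / q)) / m) by (field; lra).
  rewrite E. field. lra.
Qed.

Lemma Rpower32 lam : 0 < lam -> Rpower lam (3/2) = sqrt (lam^3).
Proof.
  intro H. replace (3/2) with (INR 3 * / 2) by (simpl; field).
  rewrite <- Rpower_mult, Rpower_pow by auto. apply Rpower_sqrt. apply pow_lt; auto.
Qed.

Theorem corollary5p5 :
  forall mu lam e eps v : R,
    0 < mu -> 0 < lam -> 0 < e < 1 -> 0 < eps -> 0 <= v < 2 * PI ->
    let Rf := fun p : R3 => eps ^ 2 * Reps mu lam e eps p in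
    let dN := - (mu ^ 2 / lam ^ 3) *
              ((1 + e * cos v) / ((1 - e * cos v) * (1 + e ^ 2 + 2 * e * cos v))) in
    let dK := - (mu ^ 2 / lam ^ 3) * (1 / (1 + e ^ 2 - 2 * e * cos v)) in
    second_dir_deriv Rf (xell mu lam e v) (nhat e v) dN /\
    second_dir_deriv Rf (xell mu lam e v) khat dK /\
    eps * / sqrt (Rabs dN) =
      eps * Rpower lam (3 / 2) / mu *
      sqrt ((1 - e * cos v) * (1 + e ^ 2 + 2 * e * cos v) / (1 + e * cos v)) /\
    eps * / sqrt (Rabs dK) =
      eps * Rpower lam (3 / 2) / mu * sqrt (1 + e ^ 2 - 2 * e * cos v).
Proof.
  intros mu lam e eps v Hmu Hlam He Heps Hv Rf dN dK.
  split; [apply nhat_case; auto|].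
  split; [apply khat_case; auto|].
  assert (HC1 : -1 <= cos v <= 1) by (split; [apply COS_bound| apply COS_bound]).
  assert (HL : 0 < lam^3) by (apply pow_lt; auto).
  rewrite Rpower32 by auto.
  assert (H1 : 0 < 1 - e * cos v) by nra.
  assert (H2 : 0 < 1 + e * cos v) by nra.
  assert (H3 : 0 < 1 + e ^ 2 + 2 * e * cos v) by nra.
  assert (H4 : 0 < 1 + e ^ 2 - 2 * e * cos v) by nra.
  split.
  - set (q := (1 - e * cos v) * (1 + e ^ 2 + 2 * e * cos v) / (1 + e * cos v)).
    assert (Hq : 0 < q) by (unfold q; apply Rdiv_lt_0_compat; [apply Rmult_lt_0_compat|]; lra).
    assert (E : Rabs dN = mu^2/lam^3/q).
    { unfold dN, q. rewrite Rabs_left.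
      - field. repeat split; nra.
      - assert (0 < (1 + e * cos v) / ((1 - e * cos v) * (1 + e ^ 2 + 2 * e * cos v)))
          by (apply Rdiv_lt_0_compat; nra).
        assert (0 < mu ^ 2 / lam ^ 3) by (apply Rdiv_lt_0_compat; nra). nra. }
    rewrite E, std_lem by auto. field. lra.
  - set (q := 1 + e ^ 2 - 2 * e * cos v).
    assert (Hq : 0 < q) by (unfold q; nra).
    assert (E : Rabs dK = mu^2/lam^3/q).
    { unfold dK. fold q. rewrite Rabs_left.
      - field. split; lra.
      - assert (0 < 1 / q) by (apply Rdiv_lt_0_compat; nra).
        assert (0 < mu ^ 2 / lam ^ 3) by (apply Rdiv_lt_0_compat; nra). nra. }
    rewrite E, std_lem by auto. field. lra.
Qed.
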